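(* Let $N,d\in\mathbb N$, let $D$ be a set and $C\subseteq D$, and let $b_0,\ldots,b_N:D\to\mathbb R$ satisfy $b_k(\mathbf x)\ge0$ and $\sum_{k=0}^N b_k(\mathbf x)=1$ for all $\mathbf x\in C$. Let $\omega_0,\ldots,\omega_N>0$ and $\mathbf W_0,\ldots,\mathbf W_N\in\mathbb R^d$, and set $\mathbf S_N(\mathbf x):=\frac{\sum_{k=0}^N\omega_k\mathbf W_kb_k(\mathbf x)}{\sum_{k=0}^N\omega_kb_k(\mathbf x)}$ for $\mathbf x\in C$. Fix $\mathbf t,\mathbf u\in C$ with $b_k(\mathbf t)>0$ and $b_k(\mathbf u)>0$ for $1\le k\le N$. Define $h_0:=1$, $\mathbf Q_0:=\mathbf W_0$ and, for $k=1,\ldots,N$, $$h_k:=\left(1+\frac{\omega_{k-1}b_{k-1}(\mathbf t)}{h_{k-1}\,\omega_k b_k(\mathbf t)}\right)^{-1},\qquad \mathbf Q_k:=(1-h_k)\mathbf Q_{k-1}+h_k\mathbf W_k .$$ Assume $h_k\neq0$ for $1\le k\le N$, and suppose $$\frac{b_k(\mathbf t)}{b_{k+1}(\mathbf t)}\le\frac{b_k(\mathbf u)}{b_{k+1}(\mathbf u)}\qquad(0\le k\le N-1).$$ Then $\mathbf S_N(\mathbf u)\in\operatorname{conv}\{\mathbf Q_0,\mathbf Q_1,\ldots,\mathbf Q_N\}$.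
   Context: $\operatorname{conv}$ denotes the convex hull; $\mathbb E^d$ of the paper is identified with $\mathbb R^d$. *)

(* Defs.v *)
From mathcomp Require Import all_boot all_order all_algebra.
Set Implicit Arguments. Unset Strict Implicit. Unset Printing Implicit Defensive.
Import Order.TTheory GRing.Theory Num.Theory.
Local Open Scope ring_scope.

Definition in_conv_hull (R : realFieldType) (d : nat) (P : nat -> 'rV[R]_d)
  (N : nat) (x : 'rV[R]_d) : Prop :=
  exists lam : nat -> R,
    (forall k, (k <= N)%N -> 0 <= lam k) /\
    \sum_(k < N.+1) lam k = 1 /\
    x = \sum_(k < N.+1) lam k *: P k.

Definition SN (R : realFieldType) (d : nat) (D : Type) (N : nat)
  (b : nat -> D -> R) (omega : nat -> R) (W : nat -> 'rV[R]_d) (x : D)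
  : 'rV[R]_d :=
  (\sum_(k < N.+1) omega k * b k x)^-1 *: \sum_(k < N.+1) (omega k * b k x) *: W k.

(* h_0 = 1, h_k = (1 + omega_{k-1} b_{k-1}(t) / (h_{k-1} omega_k b_k(t)))^-1 ;
   bt k stands for b_k(t). *)
Fixpoint hseq (R : realFieldType) (bt : nat -> R) (omega : nat -> R) (k : nat) : R :=
  match k with
  | 0 => 1
  | k'.+1 => (1 + (omega k' * bt k') / (hseq bt omega k' * (omega k * bt k)))^-1
  end.

Fixpoint Qseq (R : realFieldType) (d : nat) (bt : nat -> R) (omega : nat -> R)
  (W : nat -> 'rV[R]_d) (k : nat) : 'rV[R]_d :=
  match k with
  | 0 => W 0
  | k'.+1 => (1 - hseq bt omega k) *: Qseq bt omega W k' + hseq bt omega k *: W k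
  end.

(* Main.v *)
Require Import Defs.
From mathcomp Require Import all_boot all_order all_algebra.
From mathcomp Require Import ring lra.
Import Order.TTheory GRing.Theory Num.Theory.
Local Open Scope ring_scope.

Lemma hQ_inv (R : realFieldType) d N (bt omega : nat -> R) (W : nat -> 'rV[R]_d)
  (hbt0 : 0 <= bt 0) (hbt : forall k, (1 <= k <= N)%N -> 0 < bt k)
  (homega : forall k, (k <= N)%N -> 0 < omega k) :
  forall k, (k <= N)%N ->
   (omega k * bt k) / hseq bt omega k = \sum_(j < k.+1) omega j * bt j /\
   (\sum_(j < k.+1) omega j * bt j) *: Qseq bt omega W k
      = \sum_(j < k.+1) (omega j * bt j) *: W j.
Proof.
elim=> [|k IH] hk.
  by rewrite /= divr1 !big_ord_recr !big_ord0 /= !add0r; split.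
have [IH1 IH2] := IH (ltnW hk).
have Ak : 0 <= \sum_(j < k.+1) omega j * bt j.
  apply: sumr_ge0 => j _; apply: mulr_ge0.
    by apply: ltW; apply: homega; apply: leq_trans (ltnW hk); rewrite -ltnS.
  case: j => [[|j'] hj] //=; apply: ltW; apply: hbt.
  by rewrite /= (leq_trans _ (ltnW hk)) // -ltnS.
have ak : 0 < omega k.+1 * bt k.+1 by rewrite mulr_gt0 ?homega ?hbt.
have hbk : bt k.+1 != 0 by rewrite gt_eqF ?hbt.
have hok : omega k.+1 != 0 by rewrite gt_eqF ?homega.
have ne2 : \sum_(j < k.+1) omega j * bt j + omega k.+1 * bt k.+1 != 0.
  by rewrite gt_eqF // ltr_wpDl.
have hE : hseq bt omega k.+1 = (omega k.+1 * bt k.+1) /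
           (\sum_(j < k.+1) omega j * bt j + omega k.+1 * bt k.+1).
  rewrite /= -/(hseq bt omega k) invfM mulrA IH1.
  have e : 1 + (\sum_(j < k.+1) omega j * bt j) / (omega k.+1 * bt k.+1) =
    (\sum_(j < k.+1) omega j * bt j + omega k.+1 * bt k.+1) / (omega k.+1 * bt k.+1).
    by field; rewrite ?hbk ?hok ?ne2.
  by rewrite e invf_div.
split.
  by rewrite hE [in RHS]big_ord_recr /=; field; rewrite ?hbk ?hok ?ne2.
rewrite big_ord_recr [in RHS]big_ord_recr /= -IH2.
rewrite -/(Qseq bt omega W k) -/(hseq bt omega k.+1) hE scalerDr !scalerA.
congr (_ *: _ + _ *: _); field; rewrite ?hbk ?hok ?ne2. all: done.
Qed.

Lemma lin_id (R : realFieldType) d (X Pn w : 'rV[R]_d) (s m1 m2 a : R) :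
  s *: X - m1 *: Pn + (m1 - m2) *: (Pn + a *: w) =
  s *: X + (m1 * a) *: w - m2 *: (Pn + a *: w).
Proof. by apply/rowP => i; rewrite !mxE; ring. Qed.

Theorem theorem2 (R : realFieldType) (N d : nat) (D : Type) (C : D -> Prop)
  (b : nat -> D -> R)
  (hb_nonneg : forall x, C x -> forall k, (k <= N)%N -> 0 <= b k x)
  (hb_sum : forall x, C x -> \sum_(k < N.+1) b k x = 1)
  (omega : nat -> R) (homega : forall k, (k <= N)%N -> 0 < omega k)
  (W : nat -> 'rV[R]_d)
  (t u : D) (Ct : C t) (Cu : C u)
  (hbt : forall k, (1 <= k <= N)%N -> 0 < b k t)
  (hbu : forall k, (1 <= k <= N)%N -> 0 < b k u)
  (hh : forall k, (1 <= k <= N)%N -> hseq (fun k => b k t) omega k != 0)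
  (hratio : forall k, (k < N)%N -> b k t / b k.+1 t <= b k u / b k.+1 u) :
  in_conv_hull (Qseq (fun k => b k t) omega W) N (SN N b omega W u).
Proof.
pose a k := omega k * b k t.
pose c k := omega k * b k u.
pose Cs := \sum_(k < N.+1) c k.
pose A k := \sum_(j < k.+1) a j.
pose P k := \sum_(j < k.+1) a j *: W j.
pose mu k := if (k <= N)%N then c k / (Cs * a k) else 0.
pose lam k := if k is 0 then c 0%N / Cs - a 0%N * mu 1%N else A k * (mu k - mu k.+1).
pose Q := Qseq (fun k => b k t) omega W.
have a_ge0 k : (k <= N)%N -> 0 <= a k.
  by move=> hk; rewrite mulr_ge0 ?hb_nonneg // ltW ?homega.
have c_ge0 k : (k <= N)%N -> 0 <= c k.
  by move=> hk; rewrite mulr_ge0 ?hb_nonneg // ltW ?homega.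
have a_gt0 k : (1 <= k <= N)%N -> 0 < a k.
  by move=> /andP[h1 hk]; rewrite mulr_gt0 ?hbt ?h1 // homega.
have Cpos : 0 < Cs.
  rewrite lt_def sumr_ge0 ?andbT; last by move=> i _; apply: c_ge0; rewrite -ltnS.
  have Hn : forall i : 'I_N.+1, true -> 0 <= c i.
    by move=> i _; apply: c_ge0; rewrite -ltnS.
  apply/eqP => /(psumr_eq0P Hn) H.
  have : \sum_(k < N.+1) b k u = 0.
    apply: big1 => i _.
    have := H i isT; rewrite /c => /eqP; rewrite mulf_eq0 => /orP[|/eqP //].
    by rewrite gt_eqF // homega // -ltnS.
  by rewrite hb_sum // => /eqP; rewrite oner_eq0.
have CsN : Cs != 0 by rewrite gt_eqF.
have A_ge0 k : (k <= N)%N -> 0 <= A k.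
  move=> hk; apply: sumr_ge0 => j _; apply: a_ge0.
  by apply: leq_trans hk; rewrite -ltnS.
have key k : (k < N)%N -> a k * c k.+1 <= c k * a k.+1.
  move=> hk; have := hratio k hk.
  have p1 : 0 < b k.+1 t by rewrite hbt.
  have p2 : 0 < b k.+1 u by rewrite hbu.
  rewrite ler_pdivrMr // mulrAC ler_pdivlMr // => H.
  have -> : a k * c k.+1 = (omega k * omega k.+1) * (b k t * b k.+1 u).
    by rewrite /a /c; ring.
  have -> : c k * a k.+1 = (omega k * omega k.+1) * (b k u * b k.+1 t).
    by rewrite /a /c; ring.
  by rewrite ler_wpM2l // mulr_ge0 // ltW // homega // ltnW.
have mua k : (1 <= k <= N)%N -> mu k * a k = Cs^-1 * c k.
  move=> hk; have := a_gt0 k hk; rewrite lt0r => /andP[akN _].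
  rewrite /mu; case/andP: hk => _ ->; field.
  by rewrite akN CsN.
have lam_ge0 k : (k <= N)%N -> 0 <= lam k.
  case: k => [|k] hk /=.
    rewrite subr_ge0 /mu; case: ifP => h1.
      2: by rewrite mulr0 divr_ge0 // ?c_ge0 // ltW.
    have a1 := a_gt0 1%N h1.
    have := key 0%N h1 => H.
    have e1 : a 0%N * (c 1%N / (Cs * a 1%N)) = (a 0%N * c 1%N) * (Cs * a 1%N)^-1.
      by rewrite mulrA.
    have e2 : c 0%N / Cs = (c 0%N * a 1%N) * (Cs * a 1%N)^-1.
      by field; rewrite CsN gt_eqF.
    rewrite e1 e2 ler_wpM2r //.
    by rewrite invr_ge0 mulr_ge0 // ltW.
  apply: mulr_ge0; first exact: A_ge0.
  rewrite subr_ge0 /mu hk.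
  have ak := a_gt0 k.+1 hk.
  case: ifP => hk1; last first.
    by rewrite divr_ge0 ?c_ge0 // mulr_ge0 // ltW.
  have ak1 := a_gt0 k.+2 hk1.
  have e1 : c k.+2 / (Cs * a k.+2) = (c k.+2 * a k.+1) * (Cs * a k.+1 * a k.+2)^-1.
    by field; rewrite CsN !gt_eqF.
  have e2 : c k.+1 / (Cs * a k.+1) = (c k.+1 * a k.+2) * (Cs * a k.+1 * a k.+2)^-1.
    by field; rewrite CsN !gt_eqF.
  rewrite e1 e2; apply: ler_wpM2r; first by rewrite invr_ge0; apply: mulr_ge0; [apply: mulr_ge0|]; apply: ltW.
  by rewrite [c k.+2 * _]mulrC; apply: key.
have inv k : (k <= N)%N -> A k *: Q k = P k.
  move=> hk.
  have := @hQ_inv R d N (fun k => b k t) omega W (hb_nonneg _ Ct 0%N isT) hbt homega k hk.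
  by case.
have vec n : (n <= N)%N -> \sum_(k < n.+1) lam k *: Q k =
    Cs^-1 *: \sum_(j < n.+1) c j *: W j - mu n.+1 *: P n.
  elim: n => [|n IH] hn.
    rewrite !big_ord_recr !big_ord0 /= !add0r /lam /P big_ord_recr big_ord0 /= add0r.
    by rewrite !scalerA -scalerBl; congr (_ *: _); ring.
  rewrite big_ord_recr /= IH ?(ltnW hn) //.
  have -> : lam n.+1 *: Q n.+1 = (mu n.+1 - mu n.+2) *: P n.+1.
    by rewrite /lam -inv // scalerA mulrC.
  have eP : P n.+1 = P n + a n.+1 *: W n.+1 by rewrite /P big_ord_recr.
  have eC : \sum_(j < n.+2) c j *: W j = \sum_(j < n.+1) c j *: W j + c n.+1 *: W n.+1.
    by rewrite big_ord_recr.
  by rewrite eP eC lin_id mua // -[(Cs^-1 * _) *: _]scalerA -scalerDr.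
have sca n : (n <= N)%N -> \sum_(k < n.+1) lam k =
    Cs^-1 * \sum_(j < n.+1) c j - mu n.+1 * A n.
  elim: n => [|n IH] hn.
    rewrite !big_ord_recr !big_ord0 /= !add0r /lam /A big_ord_recr big_ord0 /= add0r.
    ring.
  rewrite big_ord_recr /= IH ?(ltnW hn) //.
  have eP : A n.+1 = A n + a n.+1 by rewrite /A big_ord_recr.
  have eC : \sum_(j < n.+2) c j = \sum_(j < n.+1) c j + c n.+1.
    by rewrite big_ord_recr.
  rewrite /lam /= eP eC [Cs^-1 * (_ + c _)]mulrDr -(mua n.+1 hn).
  ring.
exists lam; split; first exact: lam_ge0.
split.
  rewrite sca // /mu ltnn mul0r subr0 mulVf //.
rewrite vec // /mu ltnn scale0r subr0.
done.
Qed.
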